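(* Let $G$ be an abelian group, let $n\geq 0$, let $X\subseteq G$ be a finite, nonempty subset, let $S\in \mathcal F(G)$ be a sequence, and let $\mathscr A=A_1\cdot\ldots\cdot A_n$ be a setpartition with $\mathsf S(\mathscr A)\mid S$, $\mathrm{supp}(\mathsf S(\mathscr A)^{[-1]}\cdot S)\subseteq Z$, and $|A_i\setminus Z|\leq 1$ for all $i$, where $H\leq \mathsf H(X+\sum_{i=1}^{n}A_i)$ is a subgroup and $Z\subseteq G$ satisfies $Z=Z+H\subseteq \bigcap_{i=1}^n(A_i+H)$. Then: 1. $X+\Sigma_{n}(S)=X+\sum_{i=1}^{n}A_i$. 2. If $Z=g+H$ for some $g\in G$, then $X+\Sigma_{\ell}(S)=X+\sum_{i=1}^{n}A_i+(\ell-n)g$ for every $\ell\in [n,\,n+|\mathsf S(\mathscr A)^{[-1]}\cdot S|]$.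
   Context: A sequence over $G$ is a finite unordered list of elements of $G$ (element of the free abelian monoid $\mathcal F(G)$); $|S|$ is its length, $T\mid S$ means subsequence, $T^{[-1]}\cdot S$ is $S$ with the terms of $T$ removed, $\mathrm{supp}(S)$ is the set of elements occurring in $S$, $\sigma(T)$ is the sum of terms of $T$, and $\Sigma_\ell(S)=\{\sigma(T):T\mid S,\ |T|=\ell\}$. A setpartition is a sequence $\mathscr A=A_1\cdot\ldots\cdot A_n$ of finite nonempty subsets of $G$; $\mathsf S(\mathscr A)$ is the sequence of all elements of all $A_i$ (counted once per set containing it). $\mathsf H(A)=\{g:g+A=A\}$. Sumsets $A_1+\dots+A_n=\{a_1+\dots+a_n:a_i\in A_i\}$ (an empty sumset is $\{0\}$). *)

(* Defs.v *)
From HB Require Import structures.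
From mathcomp Require Import all_boot all_order all_algebra.
From mathcomp Require Import finmap.
Set Implicit Arguments. Unset Strict Implicit. Unset Printing Implicit Defensive.
Import GRing.Theory.
Local Open Scope ring_scope.

Section Defs.
Variable G : zmodType.

(* Sequences over G (elements of F(G)) are represented by seq G, considered
   up to permutation. T | S in F(G): multiset divisibility. *)
Definition msdiv (T S : seq G) : Prop :=
  forall x : G, (count_mem x T <= count_mem x S)%N.

Definition msminus (S T : seq G) : seq G := foldr (fun x s => rem x s) S T.

Definition sigma (T : seq G) : G := \sum_(t <- T) t.

Definition Sigma_l (l : nat) (S : seq G) (g : G) : Prop :=
  exists T : seq G, [/\ msdiv T S, size T = l & sigma T = g].

Definition seq_of_setpart (n : nat) (A : 'I_n -> {fset G}) : seq G :=
  flatten [seq enum_fset (A i) | i <- enum 'I_n].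

Definition sumsetXA (X : {fset G}) (n : nat) (A : 'I_n -> {fset G}) (g : G)
  : Prop :=
  exists2 x, x \in X &
    exists a : 'I_n -> G, (forall i, a i \in A i) /\ g = x + \sum_(i < n) a i.

Definition sumsetXSigma (X : {fset G}) (l : nat) (S : seq G) (g : G) : Prop :=
  exists2 x, x \in X & exists2 s, Sigma_l l S s & g = x + s.

Definition stab (B : G -> Prop) (g : G) : Prop :=
  (forall y, B y -> B (g + y)) /\ (forall y, B y -> exists2 z, B z & y = g + z).

Definition is_subgroup (H : G -> Prop) : Prop :=
  H 0 /\ (forall x y, H x -> H y -> H (x - y)).

End Defs.

(* Main.v *)
Require Import Defs.
From HB Require Import structures.
From mathcomp Require Import all_boot all_order all_algebra.
From mathcomp Require Import finmap.
From mathcomp Require Import zify.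
From Stdlib Require Import ClassicalEpsilon.
Set Implicit Arguments. Unset Strict Implicit.
Import GRing.Theory.
Local Open Scope ring_scope.

Section Aux.
Variable G : zmodType.
Variables (H Z : G -> Prop).
Hypothesis Hsub : is_subgroup H.

Definition Zb (x : G) : bool := if excluded_middle_informative (Z x) then true else false.
Lemma ZbP x : reflect (Z x) (Zb x).
Proof. rewrite /Zb; case: excluded_middle_informative => h; by constructor. Qed.

Lemma Hopp x : H x -> H (- x).
Proof. case: Hsub => h0 hB hx. by rewrite -sub0r; apply: hB. Qed.
Lemma Hadd x y : H x -> H y -> H (x + y).
Proof. case: Hsub => h0 hB hx hy. by rewrite -[y]opprK; apply: hB => //; apply: Hopp. Qed.

Definition oneNZ (B : {fset G}) := forall a b, a \in B -> b \in B -> ~ Z a -> ~ Z b -> a = b.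

Lemma msdiv_nil (P : seq G) : msdiv P [::] -> P = [::].
Proof. case: P => // p P /(_ p) /=; rewrite eqxx. by []. Qed.

Lemma step (B : {fset G}) (L P : seq G) : oneNZ B ->
  all (predC Zb) P -> msdiv P (enum_fset B ++ L) ->
  (exists2 p, p \in P & p \in B /\ msdiv (rem p P) L) \/ msdiv P L.
Proof.
move=> hB hP hd; case: (boolP (has (fun x => x \in B) P)).
- case/hasP => p pP pB; left; exists p => //; split => // x.
  have := hd x; rewrite count_cat count_mem_rem (count_uniq_mem _ (fset_uniq B)).
  have [<-|xp] := eqVneq p x.
    by rewrite pB /=; lia.
  rewrite subn0; case xB: (x \in enum_fset B) => //=.
  case xP: (x \in P); last by rewrite (count_memPn (negbT xP)).
  have nZx : ~ Z x by move/allP: hP => /(_ x xP) /= /ZbP.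
  have nZp : ~ Z p by move/allP: hP => /(_ p pP) /= /ZbP.
  by have := hB _ _ pB xB nZp nZx; move/eqP; rewrite (negbTE xp).
- move/hasPn => hn; right => x; have := hd x.
  rewrite count_cat.
  case xP: (x \in P); last by rewrite (count_memPn (negbT xP)).
  have := hn x xP => /negbTE xB.
  by rewrite (count_memPn (negbT xB)).
Qed.

Definition flatA (As : seq {fset G}) := flatten (map (@enum_fset G) As).

Lemma all_rem (p : pred G) x (s : seq G) : all p s -> all p (rem x s).
Proof. move=> /allP h; apply/allP => y /mem_rem; exact: h. Qed.

Lemma bound (As : seq {fset G}) (P : seq G) :
  (forall B, B \in As -> oneNZ B) -> all (predC Zb) P ->
  msdiv P (flatA As) -> (size P <= size As)%N.
Proof.
elim: As P => [|B As IH] P hAs hP hd.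
  by rewrite (msdiv_nil hd).
have hB : oneNZ B by apply: hAs; rewrite inE eqxx.
have hAs' : forall B', B' \in As -> oneNZ B'.
  by move=> B' h; apply: hAs; rewrite inE h orbT.
case: (step hB hP hd) => [[p pP [pB hd']]|hd'].
  have := IH _ hAs' (all_rem _ hP) hd'; rewrite size_rem //=.
  by case: (size P) (size As).
by have := IH _ hAs' hP hd' => /= h; apply: leqW.
Qed.

Lemma claim (As : seq {fset G}) (P Q : seq G) :
  (forall B, B \in As -> oneNZ B /\
     (forall z, Z z -> exists a, exists2 h, a \in B /\ H h & z = a + h)) ->
  all (predC Zb) P -> all Zb Q -> msdiv P (flatA As) ->
  (size As <= size P + size Q)%N ->
  exists bs : seq G, all2 (fun a (B : {fset G}) => a \in B) bs As /\
    exists h, H h /\ exists V, [/\ all Zb V, size V = (size P + size Q - size As)%N &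
      sigma P + sigma Q = sigma bs + h + sigma V].
Proof.
elim: As P Q => [|B As IH] P Q hAs hP hQ hd hsz.
  rewrite (msdiv_nil hd); exists [::]; split => //; exists 0; split; first by case: Hsub.
  exists Q; split => //; first by rewrite subn0.
  by rewrite /sigma !big_nil !add0r.
have [hB hBZ] : oneNZ B /\
     (forall z, Z z -> exists a, exists2 h, a \in B /\ H h & z = a + h).
  by apply: hAs; rewrite inE eqxx.
have hAs' : forall B', B' \in As -> oneNZ B' /\
     (forall z, Z z -> exists a, exists2 h, a \in B' /\ H h & z = a + h).
  by move=> B' h; apply: hAs; rewrite inE h orbT.
case: (step hB hP hd) => [[p pP [pB hd']]|hd'].
  have hsz' : (size As <= size (rem p P) + size Q)%N.
    rewrite size_rem // -subn1; move: hsz => /=; have : (0 < size P)%N by case: (P) pP.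
    lia.
  have [bs [hbs [h [hh [V [hV sV e]]]]]] := IH _ _ hAs' (all_rem _ hP) hQ hd' hsz'.
  exists (p :: bs); split; first by rewrite /= pB.
  exists h; split => //; exists V; split => //.
    rewrite sV size_rem //= -subn1; have : (0 < size P)%N by case: (P) pP.
    lia.
  rewrite /sigma (perm_big _ (perm_to_rem pP)) !big_cons.
  by rewrite -/(sigma _) -addrA e !addrA.
case: Q hQ hsz => [|q Q] hQ hsz.
  have := bound (fun B' h => (hAs' B' h).1) hP hd'; move: hsz => /=; lia.
move: hQ => /= /andP [/ZbP qZ hQ].
have [a [h' [aB hh'] eq]] := hBZ q qZ.
have hsz2 : (size As <= size P + size Q)%N by move: hsz => /=; lia.
have [bs [hbs [h [hh [V [hV sV e]]]]]] := IH P Q hAs' hP hQ hd' hsz2.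
exists (a :: bs); split; first by rewrite /= aB.
exists (h + h'); split; first by apply: Hadd.
exists V; split => //; first by rewrite sV /=; lia.
rewrite /sigma !big_cons -!/(sigma _) eq.
rewrite addrCA e.
rewrite !addrA; congr (_ + _).
by rewrite [RHS]addrAC; congr (_ + _); rewrite addrAC.
Qed.

Lemma msminus_count (P S : seq G) : msdiv P S ->
  forall x, count_mem x (msminus S P) = (count_mem x S - count_mem x P)%N.
Proof.
elim: P => [|p P IH] hd x /=; first by rewrite subn0.
have hd' : msdiv P S by move=> y; apply: leq_trans (hd y); rewrite /= leq_addl.
have pin : p \in msminus S P.
  rewrite -has_pred1 has_count IH //; have := hd p; rewrite /= eqxx; lia.
rewrite count_mem_rem IH //; case: (p == x); rewrite /= ?subn0 ?add0n ?subnDA ?add1n ?subn1 //; lia.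
Qed.

Lemma sumV (g : G) (V : seq G) : all Zb V -> (forall z, Z z <-> exists2 h, H h & z = g + h) ->
  exists2 h, H h & sigma V = g *+ size V + h.
Proof.
move=> hV hg; elim: V hV => [|v V IH] /=.
  by move=> _; exists 0; [case: Hsub | rewrite /sigma big_nil addr0].
case/andP => /ZbP vZ /IH [h hh e].
have [hv hhv ev] := (hg v).1 vZ.
exists (hv + h); first exact: Hadd.
rewrite /sigma big_cons -/(sigma _) e ev mulrS.
rewrite !addrA; congr (_ + _); rewrite -!addrA; congr (_ + _); exact: addrC.
Qed.

Lemma all2_msdiv (bs : seq G) (As : seq {fset G}) :
  all2 (fun a (B : {fset G}) => a \in B) bs As -> msdiv bs (flatA As).
Proof.
elim: bs As => [|b bs IH] [|B As] //= h x.
case/andP: h => bB /IH h; rewrite count_cat; apply: leq_add; last exact: h.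
rewrite (count_uniq_mem _ (fset_uniq B)); case: (boolP (pred1 x b)) => [/eqP <-|_]; [by rewrite bB | by []].
Qed.

Lemma all2_nth (bs : seq G) (As : seq {fset G}) :
  all2 (fun a (B : {fset G}) => a \in B) bs As -> size bs = size As /\
  forall i, (i < size bs)%N -> nth 0 bs i \in nth fset0 As i.
Proof.
elim: bs As => [|b bs IH] [|B As] //= h.
case/andP: h => bB /IH [-> h]; split => // [[|i]] //= hi; exact: h.
Qed.
End Aux.

Lemma to_fun (G : zmodType) n (A : 'I_n -> {fset G}) (bs : seq G) :
  all2 (fun a (B : {fset G}) => a \in B) bs (map A (enum 'I_n)) ->
  exists a : 'I_n -> G, (forall i, a i \in A i) /\ sigma bs = \sum_(i < n) a i.
Proof.
case/all2_nth; rewrite size_map size_enum_ord => sz h.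
exists (fun i => nth 0 bs i); split.
  move=> i; have := h i; rewrite sz ltn_ord => /(_ isT).
  by rewrite (nth_map i) ?size_enum_ord // nth_ord_enum.
rewrite /sigma (big_nth 0) sz big_mkord //.
Qed.

Lemma from_fun (G : zmodType) n (A : 'I_n -> {fset G}) (a : 'I_n -> G) :
  (forall i, a i \in A i) ->
  [/\ msdiv (map a (enum 'I_n)) (seq_of_setpart A), size (map a (enum 'I_n)) = n &
    sigma (map a (enum 'I_n)) = \sum_(i < n) a i].
Proof.
move=> ha; split.
- have -> : seq_of_setpart A = flatA (map A (enum 'I_n)) by rewrite /flatA -map_comp.
  apply: all2_msdiv; elim: (enum 'I_n) => //= i s ->; by rewrite ha.
- by rewrite size_map size_enum_ord.
- by rewrite /sigma big_map big_enum.
Qed.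
Theorem lemma2p4 (G : zmodType) (n : nat) (X : {fset G}) (S : seq G)
    (A : 'I_n -> {fset G}) (H Z : G -> Prop) :
  X != fset0 ->
  (forall i, A i != fset0) ->
  is_subgroup H ->
  (forall h, H h -> stab (sumsetXA X A) h) ->
  (forall z, Z z <-> exists z', exists2 h, Z z' /\ H h & z = z' + h) ->
  (forall z, Z z -> forall i, exists a, exists2 h, a \in A i /\ H h & z = a + h) ->
  msdiv (seq_of_setpart A) S ->
  (forall x, x \in msminus S (seq_of_setpart A) -> Z x) ->
  (forall i a b, a \in A i -> b \in A i -> ~ Z a -> ~ Z b -> a = b) ->
  (forall y, sumsetXSigma X n S y <-> sumsetXA X A y) /\
  (forall g, (forall z, Z z <-> exists2 h, H h & z = g + h) ->
     forall l, (n <= l <= n + size (msminus S (seq_of_setpart A)))%N ->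
       forall y, sumsetXSigma X l S y <->
         exists2 w, sumsetXA X A w & y = w + g *+ (l - n)).
Proof.
move=> _ _ Hsub hstab _ hZA hdiv hR hone.
set SA := seq_of_setpart A; set R := msminus S SA.
set As := map A (enum 'I_n).
have eSA : SA = flatA As by rewrite /SA /flatA -map_comp.
have hAs : forall B, B \in As -> oneNZ Z B /\
     (forall z, Z z -> exists a, exists2 h, a \in B /\ H h & z = a + h).
  move=> B /mapP [i _ ->]; split; [exact: hone | by move=> z /hZA; apply].
have cntS : forall x, count_mem x S = (count_mem x SA + count_mem x R)%N.
  move=> x; rewrite /R msminus_count //; have := hdiv x; rewrite -/SA; lia.
have key : forall l y, (n <= l)%N -> sumsetXSigma X l S y ->
  exists2 x, x \in X & exists a : 'I_n -> G, (forall i, a i \in A i) /\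
    exists2 h, H h & exists V, [/\ all (Zb Z) V, size V = (l - n)%N &
      y = x + (\sum_(i < n) a i + h + sigma V)].
  move=> l y hl [x xX [s [T [hT sT eT]] ->]].
  set P := filter (predC (Zb Z)) T; set Q := filter (Zb Z) T.
  have pT : perm_eq (Q ++ P) T by rewrite /P /Q perm_filterC.
  have hP : all (predC (Zb Z)) P by apply: filter_all.
  have hQ : all (Zb Z) Q by apply: filter_all.
  have hdP : msdiv P (flatA As).
    move=> z; rewrite -eSA.
    case zZ: (Zb Z z).
      rewrite (count_memPn _) //; by rewrite mem_filter /= zZ.
    have -> : count_mem z P = count_mem z T.
      rewrite count_filter; apply: eq_count => t /=.
      by case: eqP => [->|]; rewrite ?zZ ?andbF ?andbT.
    have := hT z; rewrite cntS.
    have -> : count_mem z R = 0%N.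
      apply/count_memPn/negP => zR; move: zZ; rewrite (introT (ZbP Z z) (hR _ zR)).
      by [].
    by rewrite addn0.
  have szT : size T = (size P + size Q)%N by rewrite -(perm_size pT) size_cat addnC.
  have hsz : (size As <= size P + size Q)%N by rewrite size_map size_enum_ord -szT sT.
  have [bs [hbs [h [hh [V [hV sV e]]]]]] := claim Hsub hAs hP hQ hdP hsz.
  have [a [ha ea]] := to_fun hbs.
  exists x => //; exists a; split => //; exists h => //; exists V; split => //.
    by rewrite sV -szT sT size_map size_enum_ord.
  rewrite -eT -ea -e /sigma -(perm_big _ pT) big_cat /= addrC //.
have B0 : forall x a, x \in X -> (forall i, a i \in A i) -> sumsetXA X A (x + \sum_(i < n) a i).
  by move=> x a xX ha; exists x => //; exists a.
split.
  move=> y; split.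
    move=> hy; have [x xX [a [ha [h hh [V [_ sV ->]]]]]] := key n y (leqnn n) hy.
    move: sV; rewrite subnn; case: V => // _.
    rewrite /sigma big_nil addr0 addrA addrC.
    exact: (hstab h hh).1 _ (B0 x a xX ha).
  case=> x xX [a [ha ->]].
  have [d1 d2 d3] := from_fun ha.
  exists x => //; exists (sigma (map a (enum 'I_n))); last by rewrite d3.
  exists (map a (enum 'I_n)); split => //.
  by move=> z; apply: leq_trans (d1 z) (hdiv z).
move=> g hg l /andP [hl1 hl2] y; split.
  move=> hy; have [x xX [a [ha [h hh [V [hV sV ->]]]]]] := key l y hl1 hy.
  have [h2 hh2 ->] := sumV Hsub hV hg.
  exists ((h + h2) + (x + \sum_(i < n) a i)).
    exact: (hstab _ (Hadd Hsub hh hh2)).1 _ (B0 x a xX ha).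
  rewrite sV [X in _ = X + _]addrC -!addrA (addrC (g *+ _) h2) //.
case=> w hw ->.
set k := (l - n)%N; set T0 := take k R.
have hT0 : all (Zb Z) T0.
  apply/allP => t /mem_take tR; apply/ZbP; exact: hR.
have [h0 hh0 e0] := sumV Hsub hT0 hg.
have szT0 : size T0 = k by rewrite size_takel //; rewrite /k; lia.
have [x' x'X [a' [ha' e']]] := (hstab _ (Hopp Hsub hh0)).1 _ hw.
have [d1 d2 d3] := from_fun ha'.
exists x' => //; exists (sigma (map a' (enum 'I_n) ++ T0)).
  exists (map a' (enum 'I_n) ++ T0); split => //.
  - move=> z; rewrite count_cat cntS; apply: leq_add; first exact: d1.
    by rewrite /T0 -{2}(cat_take_drop k R) count_cat leq_addr.
  - by rewrite size_cat d2 szT0 /k; lia.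
rewrite /sigma big_cat /= -!/(sigma _) d3 e0 szT0 [RHS]addrA -e' (addrC _ h0) addrA (addrC (- h0) w) addrNK //.
Qed.
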